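(* Let $s>1$ and $n\geq1$ be integers, let $(R_1,M_1),\dots,(R_s,M_s)$ be quasi-local commutative rings, and let $R=R_1\times\cdots\times R_s$. If every proper ideal of $R$ is a weakly $n$-absorbing ideal of $R$, then $M_1^n=M_2^n=\cdots=M_s^n=\{0\}$.
   Context: All rings are commutative with $1\neq0$. A quasi-local ring $(R_i,M_i)$ is a ring with unique maximal ideal $M_i$. A proper ideal $I$ of $R$ is weakly $n$-absorbing if whenever $0\neq a_1\cdots a_{n+1}\in I$ with $a_1,\dots,a_{n+1}\in R$, there are $n$ of the $a_i$'s whose product is in $I$. *)

(* Defs.v *)
From HB Require Import structures.
From mathcomp Require Import all_boot all_order all_algebra.
Set Implicit Arguments. Unset Strict Implicit. Unset Printing Implicit Defensive.
Import GRing.Theory.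
Local Open Scope ring_scope.

Section ProdRing.
Variables (s : nat) (R : 'I_s -> comNzRingType).

Definition prodring := {dffun forall i : 'I_s, R i}.
HB.instance Definition _ := Choice.on prodring.

Definition pr_zero : prodring := [ffun i => 0].
Definition pr_one : prodring := [ffun i => 1].
Definition pr_opp (x : prodring) : prodring := [ffun i => - x i].
Definition pr_add (x y : prodring) : prodring := [ffun i => x i + y i].
Definition pr_mul (x y : prodring) : prodring := [ffun i => x i * y i].

Fact pr_addA : associative pr_add.
Proof. by move=> x y z; apply/ffunP=> i; rewrite !ffunE addrA. Qed.
Fact pr_addC : commutative pr_add.
Proof. by move=> x y; apply/ffunP=> i; rewrite !ffunE addrC. Qed.
Fact pr_add0 : left_id pr_zero pr_add.
Proof. by move=> x; apply/ffunP=> i; rewrite !ffunE add0r. Qed.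
Fact pr_addN : left_inverse pr_zero pr_opp pr_add.
Proof. by move=> x; apply/ffunP=> i; rewrite !ffunE addNr. Qed.

HB.instance Definition _ :=
  GRing.isZmodule.Build prodring pr_addA pr_addC pr_add0 pr_addN.

Fact pr_mulA : associative pr_mul.
Proof. by move=> x y z; apply/ffunP=> i; rewrite !ffunE mulrA. Qed.
Fact pr_mulC : commutative pr_mul.
Proof. by move=> x y; apply/ffunP=> i; rewrite !ffunE mulrC. Qed.
Fact pr_mul1 : left_id pr_one pr_mul.
Proof. by move=> x; apply/ffunP=> i; rewrite !ffunE mul1r. Qed.
Fact pr_mulDl : left_distributive pr_mul (@GRing.add prodring).
Proof. by move=> x y z; apply/ffunP=> i; rewrite !ffunE mulrDl. Qed.

HB.instance Definition _ :=
  GRing.Zmodule_isComPzRing.Build prodring pr_mulA pr_mulC pr_mul1 pr_mulDl.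

End ProdRing.

(* Ideals (as arbitrary, not necessarily decidable, subsets).          *)
Section Ideals.
Variable A : comPzRingType.

Definition is_ideal (I : A -> Prop) : Prop :=
  [/\ I 0, (forall x y, I x -> I y -> I (x + y))
    & (forall a x, I x -> I (a * x))].

Definition proper_idl (I : A -> Prop) : Prop := is_ideal I /\ ~ I 1.

Definition maximal_ideal (M : A -> Prop) : Prop :=
  proper_idl M /\
  forall J : A -> Prop, proper_idl J -> (forall x, M x -> J x) ->
    forall x, J x <-> M x.

Definition quasi_local (M : A -> Prop) : Prop :=
  maximal_ideal M /\
  forall N : A -> Prop, maximal_ideal N -> forall x, N x <-> M x.

Definition ideal_pow (M : A -> Prop) (n : nat) : A -> Prop :=
  fun x => exists (k : nat) (a : 'I_k -> 'I_n -> A),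
    (forall i j, M (a i j)) /\ x = \sum_(i < k) \prod_(j < n) a i j.

Definition weakly_n_absorbing (n : nat) (I : A -> Prop) : Prop :=
  proper_idl I /\
  forall a : 'I_n.+1 -> A,
    \prod_(i < n.+1) a i != 0 -> I (\prod_(i < n.+1) a i) ->
    exists j : 'I_n.+1, I (\prod_(i < n.+1 | i != j) a i).

End Ideals.

(* Main.v *)
Require Import Defs.
From HB Require Import structures.
From mathcomp Require Import all_boot all_order all_algebra.
From mathcomp Require Import boolp classical_sets.
Import GRing.Theory.
Local Open Scope ring_scope.
Section Comp.
Variables (s : nat) (R : 'I_s -> comNzRingType).
Lemma pr_comp0 t : (0 : prodring R) t = 0. Proof. by rewrite /= ffunE. Qed.
Lemma pr_comp1 t : (1 : prodring R) t = 1. Proof. by rewrite /= ffunE. Qed.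
Lemma pr_compD (x y : prodring R) t : (x + y) t = x t + y t. Proof. by rewrite /= ffunE. Qed.
Lemma pr_compM (x y : prodring R) t : (x * y) t = x t * y t. Proof. by rewrite /= ffunE. Qed.
Lemma pr_compP m (P : pred 'I_m) (F : 'I_m -> prodring R) t :
  (\prod_(j < m | P j) F j) t = \prod_(j < m | P j) F j t.
Proof.
apply: (big_rec2 (fun (x : prodring R) (y : R t) => x t = y)).
  exact: pr_comp1.
by move=> j x y _ <-; rewrite pr_compM.
Qed.
End Comp.
Local Open Scope classical_set_scope.
Lemma ql_unit (A : comNzRingType) (M : A -> Prop) :
  quasi_local M -> forall u, ~ M u -> exists y, u * y = 1.
Proof.
move=> [[[[M0 MD MM] M1] Mmax] Muniq] u Mu.
apply: contrapT => Nu.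
pose P := fun X : set A => X = set0 \/ (is_ideal X /\ ~ X 1 /\ X u).
have PI : forall X z, P X -> X z -> is_ideal X /\ ~ X 1.
  by move=> X z [->//|[? [? ?]]].
have chainP : forall F : set (set A), F `<=` P -> total_on F subset ->
    P (\bigcup_(X in F) X).
  move=> F FP Ftot.
  have [[X0 FX0 X0u]|none] := pselect (exists2 X, F X & X u); last first.
    left; apply/seteqP; split => // x [X FX Xx].
    case: (FP X FX) => [XE|[_ [_ Xu]]]; first by rewrite XE in Xx.
    by exfalso; apply: none; exists X.
  right; have [[I0 _ _] _] := PI _ _ (FP _ FX0) X0u.
  split; last by split; [move=> [X FX X1]; have [_ []] := PI _ _ (FP _ FX) X1 | exists X0].
  split; first by exists X0.
    move=> x y [X FX Xx] [Y FY Yy].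
    have [XY|YX] := Ftot _ _ FX FY.
      have [[_ YD _] _] := PI _ _ (FP _ FY) Yy.
      by exists Y => //; apply: YD => //; apply: XY.
    have [[_ XD _] _] := PI _ _ (FP _ FX) Xx.
    by exists X => //; apply: XD => //; apply: YX.
  move=> a x [X FX Xx]; have [[_ _ XM] _] := PI _ _ (FP _ FX) Xx.
  by exists X => //; apply: XM.
have [A0 [PA0 A0max]] := Zorn_bigcup chainP.
pose B := fun x : A => exists y, x = u * y.
have PB : is_ideal B /\ ~ B 1 /\ B u.
  split; last split.
  - split; first by exists 0; rewrite mulr0.
      by move=> x y [x' ->] [y' ->]; exists (x' + y'); rewrite mulrDr.
    by move=> a x [x' ->]; exists (a * x'); rewrite mulrCA.
  - by move=> [y Hy]; apply: Nu; exists y.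
  - by exists 1; rewrite mulr1.
case: PA0 => [A0e|[IA0 [A01 A0u]]].
  apply: (A0max B); last by right.
  rewrite A0e; split => // H; have := H u (PB.2.2); done.
have maxA0 : maximal_ideal A0.
  split; first by split.
  move=> J [IJ J1] A0J x; split; last exact: A0J.
  move=> Jx; apply: contrapT => nA0x.
  apply: (A0max J); last by right; split=> //; split=> //; apply: A0J.
  by split => // H; apply: nA0x; apply: H.
by apply: Mu; apply/(Muniq _ maxA0).
Qed.
Local Close Scope classical_set_scope.

Theorem mainTheorem9 (s n : nat) (R : 'I_s -> comNzRingType)
    (M : forall i : 'I_s, R i -> Prop) :
  (1 < s)%N -> (1 <= n)%N ->
  (forall i, quasi_local (M i)) ->
  (forall I : prodring R -> Prop, proper_idl I -> weakly_n_absorbing n I) ->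
  forall i : 'I_s, forall x : R i, ideal_pow (M i) n x <-> x = 0.
Proof.
move=> s1 n1 ql hyp i x; split; last first.
  by move=> ->; exists 0%N, (fun _ _ => 0); split; [case | rewrite big_ord0].
case: n n1 hyp => [//|n'] _ hyp.
move=> [k [a [Ma ->]]]; apply: big1 => k0 _.
move: (Ma k0) => {}Ma; set m := a k0.
have [k1 k1i] : exists k1 : 'I_s, k1 != i.
  have s0 : (0 < s)%N by apply: ltnW.
  case: (eqVneq i (Ordinal s0)) => [->|ne]; last by exists (Ordinal s0); rewrite eq_sym.
  by exists (Ordinal s1).
have ik1 : i != k1 by rewrite eq_sym.
pose c := \prod_(j < n'.+1) m j.
apply/eqP; apply/negPn/negP => cne0.
pose lift (v : R i) : prodring R :=
  [ffun t => @dfwith _ (fun t => R t) (fun t => 1) i v t].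
pose z : prodring R := [ffun t => if t == k1 then 0 else 1].
pose A (j : 'I_n'.+2) : prodring R := if j == ord_max then z else lift (m (inord j)).
have Ai j : A j i = if j == ord_max then 1 else m (inord j).
  rewrite /A; case: ifP => _; first by rewrite /z ffunE (negbTE ik1).
  by rewrite /lift ffunE dfwith_in.
have Ak1 j : A j k1 = if j == ord_max then 0 else 1.
  rewrite /A; case: ifP => _; first by rewrite /z ffunE eqxx.
  by rewrite /lift ffunE dfwith_out.
have fulli : (\prod_(j < n'.+2) A j) i = c.
  rewrite pr_compP big_ord_recr /= Ai eqxx mulr1; apply: eq_bigr => j _.
  rewrite Ai ifF; last by apply/negbTE; rewrite neq_ltn /= ltn_ord.
  by congr (m _); apply: val_inj; rewrite /= inordK // ltnS ltnW.
have fullk : (\prod_(j < n'.+2) A j) k1 = 0.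
  by rewrite pr_compP big_ord_recr /= Ak1 eqxx mulr0.
pose I := fun y : prodring R => y k1 = 0 /\ exists r, y i = c * r.
have pI : proper_idl I.
  split; last by move=> [/eqP]; rewrite pr_comp1 oner_eq0.
  split.
  - by split; rewrite pr_comp0 //; exists 0; rewrite mulr0.
  - move=> u v [uk [r ur]] [vk [r' vr]]; split; first by rewrite pr_compD uk vk addr0.
    by exists (r + r'); rewrite pr_compD ur vr mulrDr.
  - move=> b u [uk [r ur]]; split; first by rewrite pr_compM uk mulr0.
    by exists (b i * r); rewrite pr_compM ur mulrCA.
have [_ wabs] := hyp I pI.
have [j [Ijk [r Iji]]] : exists j : 'I_n'.+2, I (\prod_(t < n'.+2 | t != j) A t).
  apply: wabs.
    by apply/eqP => H; move: fulli; rewrite H pr_comp0 => /esym/eqP; rewrite (negbTE cne0).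
  by split => //; exists 1; rewrite fulli mulr1.
case: (eqVneq j ord_max) => [je|jne].
  move: Ijk; rewrite pr_compP big1 => [/eqP|t tj]; first by rewrite oner_eq0.
  by rewrite Ak1 ifF // -je; apply/negbTE.
have [[[[M0 MD MM] M1] _] _] := ql i.
set mj := m (inord j).
have Mmj : M i mj by apply: Ma.
move: Iji; rewrite pr_compP; set d := \prod_(t < _ | _) _ => dE.
have cE : c = mj * d by rewrite -fulli pr_compP (bigD1 j) //= Ai (negbTE jne).
have [y Hy] : exists y, (1 - mj * r) * y = 1.
  apply: (@ql_unit _ _ (ql i)) => H; apply: M1.
  have := MD _ _ H (MM r _ Mmj); rewrite mulrC subrK; done.
have d0 : d = 0.
  have e : d * (1 - mj * r) = 0.
    rewrite mulrBr mulr1 {1}dE cE.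
    by rewrite mulrA [mj * d]mulrC subrr.
  by rewrite -[d]mulr1 -Hy mulrA e mul0r.
by move: cne0; rewrite /c -/c cE d0 mulr0 eqxx.
Qed.
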